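(* Let $R$ be a discrete valuation ring containing a field, with maximal ideal $\mathfrak m$ and fraction field $F$. Then for every integer $n\ge0$: (1) $(1+\mathfrak m)K^M_n(F)\subseteq\widehat K^M_{n+1}(R)$; (2) $(1+\mathfrak m^{m+n})K^M_n(F)\subseteq(1+\mathfrak m^m)\widehat K^M_n(R)$ for all $m\ge1$.
   Context: $\widehat K^M_j(R)$ is the kernel of the residue (tame symbol) map $K^M_j(F)\to K^M_{j-1}(R/\mathfrak m)$ (Kerz's improved Milnor $K$-theory of $R$, viewed inside $K^M_j(F)$). For a subgroup $A\subseteq K^M_n(F)$ and a subgroup $U\subseteq F^\times$, $UA$ denotes the subgroup of $K^M_{n+1}(F)$ generated by the products $\{u\}\cdot a$ with $u\in U$, $a\in A$. *)

(* Defs.v *)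
(* Milnor K-theory is presented concretely:
   FS K = free abelian group on words (seq K); K^M_n(K) = FS K / KRel n. *)
From HB Require Import structures.
From mathcomp Require Import all_boot all_order all_algebra.
From mathcomp Require Import freeg.
Set Implicit Arguments. Unset Strict Implicit. Unset Printing Implicit Defensive.
Import Order.TTheory GRing.Theory Num.Theory.
Local Open Scope ring_scope.

Definition FS (K : fieldType) := {freeg (seq K) / int}.

Definition sym (K : fieldType) (s : seq K) : FS K := << s >>.

Inductive zspan (V : zmodType) (P : V -> Prop) : V -> Prop :=
| zspan0 : zspan P 0
| zspan_gen x : P x -> zspan P x
| zspan_sub x y : zspan P x -> zspan P y -> zspan P (x - y).

(* generators of the relation subgroup for K^M_n(K):
   - words that are not of length n or contain 0 (not symbols of F^x),
   - multilinearity in each slot,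
   - Steinberg relation on adjacent slots. *)
Definition MRelGen (K : fieldType) (n : nat) (x : FS K) : Prop :=
  (exists s : seq K, (size s != n) || (0 \in s) /\ x = sym s)
  \/ (exists (s : seq K) (i : nat) (a b : K),
        [/\ (i < size s)%N, a != 0, b != 0 &
            x = sym (set_nth 0 s i (a * b)) - sym (set_nth 0 s i a)
                - sym (set_nth 0 s i b)])
  \/ (exists (s : seq K) (i : nat),
        [/\ (i.+1 < size s)%N, s`_i + s`_i.+1 = 1 & x = sym s]).

Definition KRel (K : fieldType) (n : nat) (x : FS K) : Prop := zspan (@MRelGen K n) x.

(* the subgroup of K^M_n(K) generated by the classes of elements satisfying P *)
Definition modK (K : fieldType) (n : nat) (P : FS K -> Prop) (x : FS K) : Prop :=
  exists y, zspan P y /\ KRel n (x - y).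

(* {u} . a  (product in the Milnor K-ring), on representatives *)
Definition consK (K : fieldType) (u : K) (a : FS K) : FS K :=
  fglift (fun s : seq K => sym (u :: s)) a.

Definition symprod (K : fieldType) (U : K -> Prop) (A : FS K -> Prop) (y : FS K) : Prop :=
  exists u a, [/\ U u, A a & y = consK u a].

(* discrete valuation on F (value at 0 irrelevant); R = {x | x = 0 \/ v x >= 0} *)
Definition is_dvaluation (F : fieldType) (v : F -> int) : Prop :=
  [/\ forall x y, x != 0 -> y != 0 -> v (x * y) = v x + v y,
      forall x y, x != 0 -> y != 0 -> x + y != 0 -> Num.min (v x) (v y) <= v (x + y)
    & exists pi, pi != 0 /\ v pi = 1].

Definition inR (F : fieldType) (v : F -> int) (x : F) : Prop := x = 0 \/ 0 <= v x.
Definition mpow (F : fieldType) (v : F -> int) (j : int) (x : F) : Prop := x = 0 \/ j <= v x.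
Definition unitR (F : fieldType) (v : F -> int) (x : F) : Prop := x != 0 /\ v x = 0.
Definition oneplus (F : fieldType) (P : F -> Prop) (u : F) : Prop := exists x, P x /\ u = 1 + x.

Definition contains_field (F : fieldType) (v : F -> int) : Prop :=
  exists P : F -> Prop,
    [/\ forall x, P x -> inR v x, P 1,
        forall x y, P x -> P y -> P (x - y),
        forall x y, P x -> P y -> P (x * y)
      & forall x, P x -> x != 0 -> P x^-1].

(* res : R -> k is a surjective ring hom with kernel m, i.e. k = R/m *)
Definition is_residue (F k : fieldType) (v : F -> int) (res : F -> k) : Prop :=
  [/\ forall x y, inR v x -> inR v y -> res (x + y) = res x + res y,
      forall x y, inR v x -> inR v y -> res (x * y) = res x * res y,
      res 1 = 1,
      forall x, inR v x -> (res x = 0 <-> mpow v 1 x)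
    & forall c, exists x, inR v x /\ res x = c].

(* d : K^M_{n+1}(F) -> K^M_n(k) is the residue (tame symbol) map w.r.t. the
   uniformizer pi: the homomorphism with d{pi,u_1..u_n} = {res u_1,..,res u_n}
   and d{u_0,..,u_n} = 0 for units u_i of R (Milnor's characterization). *)
Definition is_residue_map (F k : fieldType) (v : F -> int) (res : F -> k)
    (n : nat) (pi : F) (d : FS F -> FS k) : Prop :=
  [/\ pi != 0 /\ v pi = 1,
      forall x y, d (x - y) = d x - d y,
      forall x, KRel n.+1 x -> KRel n (d x),
      forall us : seq F, size us = n -> (forall u, u \in us -> unitR v u) ->
        KRel n (d (sym (pi :: us)) - sym (map res us))
    & forall us : seq F, size us = n.+1 -> (forall u, u \in us -> unitR v u) ->
        KRel n (d (sym us))].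

(* \hat K^M_j(R) = kernel of the residue map K^M_j(F) -> K^M_{j-1}(k)
   (K^M_{-1} = 0, so \hat K^M_0(R) = K^M_0(F)) *)
Definition Khat (F k : fieldType) (v : F -> int) (res : F -> k) (j : nat) : FS F -> Prop :=
  match j with
  | 0 => fun _ => True
  | j'.+1 => fun x => forall pi d, @is_residue_map F k v res j' pi d -> KRel j' (d x)
  end.

(* Main.v *)
Require Import Defs.
From HB Require Import structures.
From mathcomp Require Import all_boot all_order all_algebra.
From mathcomp Require Import freeg.
From mathcomp Require Import zify.
Import Order.TTheory GRing.Theory Num.Theory.
Set Implicit Arguments. Unset Strict Implicit. Unset Printing Implicit Defensive.
Local Open Scope ring_scope.

Definition subgrp (V : zmodType) (Q : V -> Prop) :=
  Q 0 /\ forall x y, Q x -> Q y -> Q (x - y).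

Section Subgrp.
Variables (V : zmodType) (Q : V -> Prop) (HQ : subgrp Q).
Lemma sg0 : Q 0. Proof. by case: HQ. Qed.
Lemma sgB x y : Q x -> Q y -> Q (x - y). Proof. by case: HQ => _; apply. Qed.
Lemma sgN x : Q x -> Q (- x).
Proof. by move=> h; rewrite -sub0r; apply: sgB => //; apply: sg0. Qed.
Lemma sgD x y : Q x -> Q y -> Q (x + y).
Proof. by move=> hx hy; rewrite -[y]opprK; apply: sgB => //; apply: sgN. Qed.
Lemma sgMn x m : Q x -> Q (x *+ m).
Proof. move=> hx; elim: m => [|m IH]; first by rewrite mulr0n; exact: sg0.
by rewrite mulrS; apply: sgD. Qed.
Lemma sgMz x (c : int) : Q x -> Q (x *~ c).
Proof. by move=> hx; case: c => m; rewrite ?NegzE ?mulrNz; [apply: sgMn | apply/sgN/sgMn]. Qed.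
Lemma sg_sum (I : Type) (r : seq I) (f : I -> V) :
  (forall i, Q (f i)) -> Q (\sum_(i <- r) f i).
Proof. move=> h; elim: r => [|i r IH]; [rewrite big_nil; exact: sg0 | rewrite big_cons; exact: sgD]. Qed.
Lemma zspan_min (P : V -> Prop) : (forall x, P x -> Q x) -> forall x, zspan P x -> Q x.
Proof. move=> h x; elim=> [|y /h //|y z _ hy _ hz]; [exact: sg0 | exact: sgB]. Qed.
End Subgrp.

Lemma zspan_subgrp (V : zmodType) (P : V -> Prop) : subgrp (zspan P).
Proof. split; [exact: zspan0 | move=> x y; exact: Defs.zspan_sub]. Qed.

Section KR.
Variables (K : fieldType) (n : nat).
Local Notation KR := (@KRel K n).
Lemma KR_sg : subgrp KR. Proof. exact: zspan_subgrp. Qed.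
Lemma KR_eq x y : x = y -> KR x -> KR y. Proof. by move->. Qed.

Lemma set_nth_catE (p q : seq K) a b :
  set_nth 0 (p ++ a :: q) (size p) b = p ++ b :: q.
Proof. by elim: p => //= c p ->. Qed.

Lemma KR_bad s : (size s != n) || (0 \in s) -> KR (sym s).
Proof. by move=> h; apply: zspan_gen; left; exists s. Qed.

Lemma KR_mul p q a b : a != 0 -> b != 0 ->
  KR (sym (p ++ a * b :: q) - sym (p ++ a :: q) - sym (p ++ b :: q)).
Proof.
move=> a0 b0; apply: zspan_gen; right; left.
exists (p ++ a :: q), (size p), a, b; split => //.
  by rewrite size_cat /= addnS ltnS leq_addr.
by rewrite !set_nth_catE.
Qed.

Lemma KR_stein p q a : KR (sym (p ++ a :: (1 - a) :: q)).
Proof.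
apply: zspan_gen; right; right; exists (p ++ a :: (1 - a) :: q), (size p); split => //.
  by rewrite size_cat /= !addnS !ltnS leq_addr.
by rewrite !nth_cat ltnn ltnNge leqnSn /= subnn subSnn /= addrC subrK.
Qed.

Definition eqv x y := KR (x - y).
Lemma eqv_refl x : eqv x x. Proof. by rewrite /eqv subrr; apply: (sg0 KR_sg). Qed.
Lemma eqv_sym x y : eqv x y -> eqv y x.
Proof. by move=> h; rewrite /eqv -opprB; apply: (sgN KR_sg). Qed.
Lemma eqv_trans x y z : eqv x y -> eqv y z -> eqv x z.
Proof.
move=> h1 h2; rewrite /eqv -[x](subrK y) -addrA; apply: (sgD KR_sg) => //.
Qed.
Lemma eqvD x y x' y' : eqv x y -> eqv x' y' -> eqv (x + x') (y + y').
Proof. by move=> h1 h2; rewrite /eqv opprD addrACA; apply: (sgD KR_sg). Qed.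
Lemma eqvN x y : eqv x y -> eqv (- x) (- y).
Proof. by move=> h; rewrite /eqv -opprD; apply: (sgN KR_sg). Qed.
Lemma eqvB x y x' y' : eqv x y -> eqv x' y' -> eqv (x - x') (y - y').
Proof. by move=> h1 h2; apply: eqvD => //; apply: eqvN. Qed.
Lemma eqvMn x y m : eqv x y -> eqv (x *+ m) (y *+ m).
Proof. by move=> h; rewrite /eqv -mulrnBl; apply: (sgMn KR_sg). Qed.
Lemma eqv0 x : KR x -> eqv x 0. Proof. by rewrite /eqv subr0. Qed.
Lemma eqv0' x : eqv x 0 -> KR x. Proof. by rewrite /eqv subr0. Qed.

Section Slot.
Variables (p q : seq K).
Definition f1 a := sym (p ++ a :: q).
Lemma f1M a b : a != 0 -> b != 0 -> eqv (f1 (a * b)) (f1 a + f1 b).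
Proof. by move=> a0 b0; rewrite /eqv opprD addrA; apply: KR_mul. Qed.
Lemma f1_1 : KR (f1 1).
Proof.
have := KR_mul p q (oner_neq0 K) (oner_neq0 K); rewrite mulr1 subrr sub0r.
by move/(sgN KR_sg); rewrite opprK.
Qed.
Lemma f1V a : a != 0 -> eqv (f1 a^-1) (- f1 a).
Proof.
move=> a0; have h := f1M (invr_neq0 a0) a0; rewrite mulVf // in h.
have := eqv_trans (eqv_sym h) (eqv0 f1_1).
by rewrite /eqv subr0 opprK.
Qed.
Lemma f1X a m : a != 0 -> eqv (f1 (a ^+ m)) (f1 a *+ m).
Proof.
move=> a0; elim: m => [|m IH]; first by rewrite expr0 mulr0n; apply: eqv0; apply: f1_1.
rewrite exprS mulrS; apply: eqv_trans (f1M a0 (expf_neq0 _ a0)) _.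
by apply: eqvD => //; apply: eqv_refl.
Qed.
End Slot.

Lemma f1_cons p q a b : f1 p (a :: q) b = f1 (rcons p b) q a.
Proof. by rewrite /f1 -cats1 -catA. Qed.
End KR.

Section KR2.
Variables (K : fieldType) (n : nat).
Local Notation KR := (@KRel K n).
Local Notation eqv := (@eqv K n).

Lemma eqvKR x y : eqv x y -> KR y -> KR x.
Proof. by move=> h hy; apply: eqv0'; apply: eqv_trans h (eqv0 hy). Qed.
Lemma KReqv x y : KR x -> KR y -> eqv x y.
Proof. by move=> hx hy; apply: (sgB (KR_sg _ _)). Qed.

Section Slot2.
Variables (p q : seq K).
Definition f2 a b := sym (p ++ a :: b :: q).
Lemma f2_l a b : f2 a b = f1 p (b :: q) a. Proof. by []. Qed.
Lemma f2_r a b : f2 a b = f1 (rcons p a) q b. Proof. by rewrite /f2 /f1 -cats1 -catA. Qed.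

Lemma f2Ml a b c : a != 0 -> b != 0 -> eqv (f2 (a * b) c) (f2 a c + f2 b c).
Proof. by move=> *; rewrite !f2_l; apply: f1M. Qed.
Lemma f2Mr a b c : b != 0 -> c != 0 -> eqv (f2 a (b * c)) (f2 a b + f2 a c).
Proof. by move=> *; rewrite !f2_r; apply: f1M. Qed.
Lemma f2Vl a b : a != 0 -> eqv (f2 a^-1 b) (- f2 a b).
Proof. by move=> *; rewrite !f2_l; apply: f1V. Qed.
Lemma f2Vr a b : b != 0 -> eqv (f2 a b^-1) (- f2 a b).
Proof. by move=> *; rewrite !f2_r; apply: f1V. Qed.
Lemma f2S a : KR (f2 a (1 - a)). Proof. exact: KR_stein. Qed.

Lemma f2N a : a != 0 -> KR (f2 a (- a)).
Proof.
move=> a0; have [->|a1] := eqVneq a 1; first by rewrite f2_l; apply: f1_1.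
have h1a : 1 - a != 0 by rewrite subr_eq0 eq_sym.
have ai0 : a^-1 != 0 by rewrite invr_neq0.
have h1ai : 1 - a^-1 != 0.
  by rewrite subr_eq0 eq_sym invr_eq1.
have e : - a = (1 - a) * (1 - a^-1)^-1.
  apply: (mulIf h1ai); rewrite mulfVK // mulrBr mulr1 mulNr mulfV //.
  by rewrite opprK addrC.
rewrite e; apply: eqvKR (f2Mr _ h1a (invr_neq0 h1ai)) _.
apply: (sgD (KR_sg _ _)); first exact: f2S.
apply: eqvKR (f2Vr _ h1ai) _; apply: (sgN (KR_sg _ _)).
have := f2Vl (1 - a^-1) ai0; rewrite invrK => h; apply: eqvKR h _.
apply: (sgN (KR_sg _ _)).
exact: f2S.
Qed.

Lemma f2C a b : a != 0 -> b != 0 -> eqv (f2 a b) (- f2 b a).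
Proof.
move=> a0 b0.
have ab0 : a * b != 0 by rewrite mulf_neq0.
have h := f2N ab0.
have h1 := f2Ml (- (a * b)) a0 b0.
have e1 : - (a * b) = (- a) * b by rewrite mulNr.
have e2 : - (a * b) = a * (- b) by rewrite mulrN.
have h2 : eqv (f2 a (- (a * b))) (f2 a (-a) + f2 a b).
  by rewrite e1; apply: f2Mr => //; rewrite oppr_eq0.
have h3 : eqv (f2 b (- (a * b))) (f2 b a + f2 b (-b)).
  by rewrite e2; apply: f2Mr => //; rewrite oppr_eq0.
have h4 := eqv_trans (eqv_sym h1) (eqv0 h).
have h5 := eqv_trans (eqv_sym (eqvD h2 h3)) h4.
have h6 : eqv (f2 a (- a) + f2 a b + (f2 b a + f2 b (- b))) (f2 a b + f2 b a).
  have := eqvD (eqvD (eqv0 (f2N a0)) (eqv_refl n (f2 a b)))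
               (eqvD (eqv_refl n (f2 b a)) (eqv0 (f2N b0))).
  by rewrite add0r addr0.
have h7 := eqv_trans (eqv_sym h6) h5.
rewrite /eqv opprK; exact: eqv0' h7.
Qed.

Lemma f2pp a : a != 0 -> eqv (f2 a a) (- f2 a (-1)).
Proof.
move=> a0; have h := f2N a0.
have h1 : eqv (f2 a (-1 * a)) (f2 a (-1) + f2 a a).
  by apply: f2Mr => //; rewrite oppr_eq0 oner_eq0.
rewrite mulN1r in h1.
have h2 := eqv_trans (eqv_sym h1) (eqv0 h).
rewrite /eqv opprK addrC; exact: eqv0' h2.
Qed.
End Slot2.
End KR2.

Section Val.
Variables (F : fieldType) (v : F -> int).
Hypothesis hv : is_dvaluation v.

Lemma vM x y : x != 0 -> y != 0 -> v (x * y) = v x + v y.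
Proof. by case: hv => h _ _; apply: h. Qed.
Lemma vD x y : x != 0 -> y != 0 -> x + y != 0 -> (v x <= v (x + y)) || (v y <= v (x + y)).
Proof. by case: hv => _ h _ *; rewrite -ge_min; apply: h. Qed.
Lemma v1 : v 1 = 0.
Proof.
have := vM (oner_neq0 F) (oner_neq0 F); rewrite mulr1 => h.
by move/(congr1 (fun z => z - v 1)): h; rewrite subrr addrK => <-.
Qed.
Lemma vN1 : v (-1) = 0.
Proof.
have h : (-1 : F) != 0 by rewrite oppr_eq0 oner_eq0.
have := vM h h; rewrite mulrNN mulr1 v1; lia.
Qed.
Lemma vN x : x != 0 -> v (- x) = v x.
Proof.
move=> x0; have h : (-1 : F) != 0 by rewrite oppr_eq0 oner_eq0.
by rewrite -mulN1r vM // vN1 add0r.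
Qed.
Lemma vV x : x != 0 -> v x^-1 = - v x.
Proof.
move=> x0; have := vM (invr_neq0 x0) x0; rewrite mulVf // v1; lia.
Qed.
Lemma vX pi k : pi != 0 -> v pi = 1 -> v (pi ^+ k) = k%:Z.
Proof.
move=> p0 vp; elim: k => [|k IH]; first by rewrite expr0 v1.
rewrite exprS vM ?expf_neq0 // IH vp; lia.
Qed.
Lemma oppr_neq0' (x : F) : x != 0 -> - x != 0. Proof. by rewrite oppr_eq0. Qed.
Lemma vstrict a b : a != 0 -> b != 0 -> v a < v b -> a + b != 0 /\ v (a + b) = v a.
Proof.
move=> a0 b0 lt.
have ab0 : a + b != 0.
  apply/eqP => e; have : b = - a by apply/eqP; rewrite -addr_eq0 addrC e.
  by move=> eb; move: lt; rewrite eb vN // ltxx.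
split => //.
have h1 := vD a0 b0 ab0.
have h2 : (v (a + b) <= v a) || (v (- b) <= v a).
  have e : a + b + - b != 0 by rewrite addrK.
  by have := vD ab0 (oppr_neq0' b0) e; rewrite addrK.
rewrite vN // in h2.
move: h1 h2; rewrite -!(rwP orP); lia.
Qed.

Lemma unit1p y : y != 0 -> 1 <= v y -> 1 + y != 0 /\ v (1 + y) = 0.
Proof.
move=> y0 h; have := @vstrict 1 y (oner_neq0 F) y0; rewrite v1; apply; lia.
Qed.

Lemma decomp pi a : pi != 0 -> v pi = 1 -> a != 0 ->
  exists k : nat, exists w, unitR v w /\ (a = pi ^+ k * w \/ a * pi ^+ k = w).
Proof.
move=> p0 vp a0; have pk0 k : pi ^+ k != 0 by rewrite expf_neq0.
case ea: (v a) => [k|k].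
  exists k, (a / pi ^+ k); split; last by left; rewrite mulrC divfK.
  split; first by rewrite mulf_neq0 ?invr_neq0.
  by rewrite vM ?invr_neq0 // vV // vX // ea; lia.
exists k.+1, (a * pi ^+ k.+1); split; last by right.
split; first by rewrite mulf_neq0.
rewrite vM // vX // ea; lia.
Qed.
End Val.

Lemma subrBB (V : zmodType) (x y x' y' : V) : x - y - (x' - y') = (x - x') - (y - y').
Proof. by rewrite !opprB addrACA [RHS]addrACA [- x' + _]addrC. Qed.

Section ModK.
Variables (K : fieldType) (n : nat).
Local Notation KR := (@KRel K n).
Local Notation eqv := (@eqv K n).

Lemma modK_sg (P : FS K -> Prop) : subgrp (modK n P).
Proof.
split; first by exists 0; split; [exact: zspan0 | rewrite subrr; exact: (sg0 (KR_sg _ _))].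
move=> x y [x' [hx' kx]] [y' [hy' ky]]; exists (x' - y'); split.
  exact: Defs.zspan_sub.
rewrite subrBB.
exact: (sgB (KR_sg _ _)).
Qed.
Lemma modK_gen (P : FS K -> Prop) z : P z -> modK n P z.
Proof. by move=> h; exists z; split; [exact: zspan_gen | rewrite subrr; exact: (sg0 (KR_sg _ _))]. Qed.
Lemma modK_KR (P : FS K -> Prop) z : KR z -> modK n P z.
Proof. by move=> h; exists 0; split; [exact: zspan0 | rewrite subr0]. Qed.
Lemma modK_eqv (P : FS K -> Prop) x y : eqv x y -> modK n P y -> modK n P x.
Proof.
move=> h hy; rewrite -[x](subrK y); apply: (sgD (modK_sg P)) => //.
exact: modK_KR.
Qed.
Lemma modK_trans (P Q : FS K -> Prop) :
  (forall z, P z -> modK n Q z) -> forall x, modK n P x -> modK n Q x.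
Proof.
move=> h x [y [hy kx]]; apply: modK_eqv kx _.
exact: (zspan_min (modK_sg Q)) hy.
Qed.
End ModK.

Section Sort.
Variables (F : fieldType) (v : F -> int) (pi : F).
Hypothesis hv : is_dvaluation v.
Hypothesis p0 : pi != 0.
Hypothesis vp : v pi = 1.

Definition allu (e : seq F) := forall x, x \in e -> unitR v x.
Definition goodw (e : seq F) := allu e \/ exists us, e = pi :: us /\ allu us.
Definition G (N : nat) (p : seq F) (z : FS F) :=
  exists e, [/\ goodw e, size e = N & z = sym (p ++ e)].

Lemma allu_cons a e : unitR v a -> allu e -> allu (a :: e).
Proof. by move=> ha he x; rewrite inE => /orP [/eqP -> | /he]. Qed.

Lemma unitN1 : unitR v (-1).
Proof. by split; [rewrite oppr_eq0 oner_eq0 | exact: vN1]. Qed.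

Lemma sort_step n N p b : (b = pi \/ unitR v b) ->
  forall z, G N (rcons p b) z -> modK n (G N.+1 p) z.
Proof.
move=> hb z [e [ge se ->]]; rewrite cat_rcons.
case: ge => [ue | [us [ee uus]]]; last subst e.
  apply: modK_gen; exists (b :: e); split; [|by rewrite /= se|by []].
  case: hb => [-> | hb]; [right; exists e; split => // | left; exact: allu_cons].
case: hb => [-> | hb].
  have h := f2pp n p us p0.
  apply: (modK_eqv h); apply: (sgN (modK_sg _ _)); apply: modK_gen.
  exists (pi :: -1 :: us); split; [|by rewrite -se|by []].
  by right; exists (-1 :: us); split => //; apply: allu_cons => //; exact: unitN1.
have h := f2C n p us (proj1 hb) p0.
apply: (modK_eqv h); apply: (sgN (modK_sg _ _)); apply: modK_gen.
exists (pi :: b :: us); split; [|by rewrite -se|by []].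
by right; exists (b :: us); split => //; apply: allu_cons.
Qed.

Lemma wsort n s : forall p, (forall x, x \in s -> x != 0) ->
  modK n (G (size s) p) (sym (p ++ s)).
Proof.
elim: s => [|a s IH] p hs.
  apply: modK_gen; exists [::]; split => //; left => x; by rewrite in_nil.
have a0 : a != 0 by apply: hs; rewrite mem_head.
have hs' : forall x, x \in s -> x != 0 by move=> x hx; apply: hs; rewrite inE hx orbT.
have IHb b : (b = pi \/ unitR v b) -> modK n (G (size s).+1 p) (f1 p s b).
  move=> hb; rewrite /f1 -cat_rcons.
  exact: (modK_trans (@sort_step n (size s) p b hb)) (IH _ hs').
have hpi := IHb pi (or_introl erefl).
have [k [w [uw [ea | ea]]]] := decomp hv p0 vp a0.
  have hw := IHb w (or_intror uw).
  have e1 : eqv n (f1 p s a) (f1 p s pi *+ k + f1 p s w).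
    rewrite ea; apply: eqv_trans (f1M n p s (expf_neq0 k p0) (proj1 uw)) _.
    apply: eqvD; [exact: f1X | exact: eqv_refl].
  apply: (modK_eqv e1); apply: (sgD (modK_sg _ _)) => //.
  exact: (sgMn (modK_sg _ _)).
have hw := IHb w (or_intror uw).
have e1 : eqv n (f1 p s a) (f1 p s w - f1 p s pi *+ k).
  rewrite -ea; have h := f1M n p s a0 (expf_neq0 k p0).
  have h2 := f1X n p s k p0.
  have h3 := eqv_trans h (eqvD (eqv_refl n (f1 p s a)) h2).
  rewrite /eqv opprB addrA; rewrite /eqv in h3.
  by rewrite -opprB; apply: (sgN (KR_sg _ _)).
apply: (modK_eqv e1); apply: (sgB (modK_sg _ _)) => //.
exact: (sgMn (modK_sg _ _)).
Qed.
End Sort.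

Section Key.
Variables (F : fieldType) (v : F -> int) (pi : F).
Hypothesis hv : is_dvaluation v.
Hypothesis p0 : pi != 0.
Hypothesis vp : v pi = 1.

Lemma keyA N q y k : y != 0 -> v y = k%:Z -> (1 <= k)%N ->
  exists w, unitR v w /\ eqv N (f2 [::] q (1 + y) pi *+ k) (- f2 [::] q (1 + y) w).
Proof.
move=> y0 vy k1.
have pk0 : pi ^+ k != 0 by rewrite expf_neq0.
have [u0 _] := unit1p hv y0 (ltac:(lia) : 1 <= v y).
set w := - y / pi ^+ k.
have w0 : w != 0 by rewrite mulf_neq0 ?oppr_eq0 ?invr_neq0.
have vw : v w = 0 by rewrite vM ?oppr_eq0 ?invr_neq0 // vN // vV // vX // vy; lia.
exists w; split => //.
have ey : - y = pi ^+ k * w by rewrite mulrC divfK.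
have hS := f2S N [::] q (1 + y).
have e1 : 1 - (1 + y) = - y by rewrite opprD addrA subrr add0r.
rewrite e1 ey in hS.
have h1 := f2Mr N [::] q (1 + y) pk0 w0.
have h2 : eqv N (f2 [::] q (1 + y) (pi ^+ k)) (f2 [::] q (1 + y) pi *+ k).
  by rewrite !f2_r; apply: f1X.
have h3 := eqv_trans (eqv_sym h1) (eqv0 hS).
have h4 := eqv_trans (eqv_sym (eqvD h2 (eqv_refl N (f2 [::] q (1 + y) w)))) h3.
by rewrite /eqv opprK; apply: eqv0'.
Qed.

Definition W q (J : nat) (z : FS F) :=
  exists y w, [/\ y != 0, (J.-1)%:Z <= v y, unitR v w & z = sym (1 + y :: w :: q)].

Lemma keyB N q J y k : y != 0 -> v y = k%:Z -> (1 <= k)%N -> (J.-1 <= k)%N ->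
  modK N (W q J) (f2 [::] q (1 + y) pi *+ k).
Proof.
move=> y0 vy k1 kJ; have [w [uw h]] := keyA N q y0 vy k1.
apply: (modK_eqv h); apply: (sgN (modK_sg _ _)); apply: modK_gen.
by exists y, w; split => //; rewrite vy; lia.
Qed.

Lemma key N q x0 J : x0 != 0 -> v x0 = J%:Z -> (2 <= J)%N ->
  modK N (W q J) (f2 [::] q (1 + x0) pi).
Proof.
move=> x00 vx J2.
set y1 := pi ^+ J.-1.
have y10 : y1 != 0 by rewrite expf_neq0.
have vy1 : v y1 = (J.-1)%:Z by rewrite vX.
have [u10 vu1] := unit1p hv y10 (ltac:(rewrite vy1; lia) : 1 <= v y1).
have [d0 vd] : - y1 + x0 != 0 /\ v (- y1 + x0) = v (- y1).
  apply: vstrict => //; rewrite ?oppr_eq0 // vN // vy1 vx; lia.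
rewrite vN // vy1 addrC in vd; rewrite addrC in d0.
set y2 := (x0 - y1) / (1 + y1).
have y20 : y2 != 0 by rewrite mulf_neq0 ?invr_neq0.
have vy2 : v y2 = (J.-1)%:Z by rewrite vM ?invr_neq0 // vV // vd vu1; lia.
have [u20 _] := unit1p hv y20 (ltac:(rewrite vy2; lia) : 1 <= v y2).
have ex : 1 + x0 = (1 + y1) * (1 + y2).
  rewrite mulrDr mulr1 [_ * (_ / _)]mulrC divfK //.
  by rewrite addrACA subrr addr0.
have h1 := f2Ml N [::] q pi u10 u20.
rewrite -ex in h1.
set A := f2 [::] q (1 + x0) pi.
have hJ := @keyB N q J x0 J x00 vx (ltac:(lia)) (leq_pred J).
have hJ1 : modK N (W q J) (A *+ J.-1).
  apply: (modK_eqv (eqvMn _ h1)); rewrite mulrnDl.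
  apply: (sgD (modK_sg _ _)); apply: keyB => //; lia.
have -> : A = A *+ J - A *+ J.-1.
  by rewrite -(prednK (ltac:(lia) : (0 < J)%N)) mulrS /= addrK.
exact: (sgB (modK_sg _ _)).
Qed.
End Key.

Lemma consK_sym (K : fieldType) (u : K) s : consK u (sym s) = sym (u :: s).
Proof. by rewrite /consK /sym liftU scale1r. Qed.

Lemma consK_Q (K : fieldType) (Q : FS K -> Prop) (HQ : subgrp Q) u :
  (forall s, Q (sym (u :: s))) -> forall a, Q (consK u a).
Proof.
move=> h a; rewrite -(freeg_sumE a).
set g := consK u.
have gB : forall x y, g (x - y) = g x - g y.
  by move=> x y; rewrite /g /consK; exact: (lift_is_additive (fun s : seq K => sym (u :: s))).
have g0 : g 0 = 0 by have := gB 0 0; rewrite !subrr.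
have gD : forall x y, g (x + y) = g x + g y.
  move=> x y; have gN : g (- y) = - g y by rewrite -sub0r gB g0 sub0r.
  by rewrite -{1}[y]opprK gB gN opprK.
elim: (dom a) => [|z r IH]; first by rewrite big_nil g0; exact: (sg0 HQ).
rewrite big_cons gD; apply: (sgD HQ) => //.
rewrite /g /consK liftU -[coeff z a]intz.
rewrite scaler_int; apply: (sgMz HQ); exact: h.
Qed.

Lemma Khat_units (F k : fieldType) (v : F -> int) (res : F -> k) n e :
  allu v e -> size e = n -> Khat v res n (sym e).
Proof.
case: n => [//|n] ue se pi d [_ _ _ _ du]; apply: du => //.
Qed.

Lemma sym1 (K : fieldType) N s : KRel N (sym (1 :: s) : FS K).
Proof. exact: (f1_1 N [::] s). Qed.

Unset Implicit Arguments. Set Strict Implicit.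

Theorem lemma3p4 (F : fieldType) (v : F -> int) (k : fieldType) (res : F -> k) :
  is_dvaluation v -> contains_field v -> is_residue v res ->
  forall n : nat,
    (forall x : FS F,
        modK n.+1 (symprod (oneplus (mpow v 1)) (fun _ => True)) x ->
        Khat v res n.+1 x) /\
    (forall m : nat, (1 <= m)%N -> forall x : FS F,
        modK n.+1 (symprod (oneplus (mpow v (m + n)%:Z)) (fun _ => True)) x ->
        modK n.+1 (symprod (oneplus (mpow v m%:Z)) (Khat v res n)) x).
Proof.
move=> hv _ hres n.
have inR1 : inR v 1 by right; rewrite v1.
split.
- move=> x [y [hy kxy]] pi d [[p0 vp] dB dK dpi du].
  pose Q := fun z => KRel n (d z).
  have d0 : d 0 = 0 by have := dB 0 0; rewrite !subrr.
  have dN z : d (- z) = - d z by rewrite -sub0r dB d0 sub0r.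
  have HQ : subgrp Q.
    split; first by rewrite /Q d0; exact: (sg0 (KR_sg _ _)).
    by move=> a b ha hb; rewrite /Q dB; apply: (sgB (KR_sg _ _)).
  have -> : x = (x - y) + y by rewrite subrK.
  apply: (sgD HQ); first exact: dK.
  apply: (zspan_min HQ) hy => z [u [a [[x0 [hx0 ->]] _ ->]]].
  apply: (consK_Q HQ) => s.
  have [-> | x00] := eqVneq x0 0.
    by rewrite addr0; apply: dK; apply: sym1.
  have vx0 : 1 <= v x0 by case: hx0 => // e; rewrite e eqxx in x00.
  have [u0 vu] := unit1p hv x00 vx0.
  have uu : unitR v (1 + x0) by [].
  have ru : res (1 + x0) = 1.
    case: hres => hadd _ r1 hker _.
    have ix0 : inR v x0 by right; lia.
    by rewrite hadd // r1 (proj2 (hker x0 ix0) hx0) addr0.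
  case bad: ((size s != n) || (0 \in s)).
    apply: dK; apply: KR_bad; move: bad => /orP [h | h]; apply/orP; [left | right] => //.
    by rewrite inE h orbT.
  move/negbT: bad; rewrite negb_or negbK => /andP [/eqP ss s0].
  have hs : forall x, x \in s -> x != 0.
    by move=> t ht; apply/eqP => e; rewrite -e ht in s0.
  have [y' [hy' k']] := wsort hv p0 vp (n.+1) [:: 1 + x0] hs.
  have -> : sym (1 + x0 :: s) = (sym ([:: 1 + x0] ++ s) - y') + y' by rewrite subrK.
  apply: (sgD HQ); first exact: dK.
  apply: (zspan_min HQ) hy' => z' [e [ge se ->]].
  case: ge => [ue | [us [ee uus]]].
    apply: du; first by rewrite /= se ss.
    exact: allu_cons.
  subst e.
  have hC := f2C (n.+1) [::] us u0 p0.
  have hd := dK _ hC; rewrite dB dN opprK in hd.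
  have hp := dpi (1 + x0 :: us).
  have hp' : KRel n (d (sym (pi :: 1 + x0 :: us))).
    have h1 : KRel n (sym (map res (1 + x0 :: us))) by rewrite /= ru; apply: sym1.
    have := sgD (KR_sg _ _) (hp _ _) h1; rewrite subrK; apply.
      by rewrite -ss -se.
    exact: allu_cons.
  have := sgB (KR_sg _ _) hd hp'; rewrite addrK; apply.
- move=> m m1 x hx.
  have [pi [p0 vp]] : exists pi, pi != 0 /\ v pi = 1 by case: hv.
  apply: (modK_trans _ hx) => z [u [a [[x0 [hx0 ->]] _ ->]]].
  apply: (consK_Q (modK_sg _ _)) => s.
  have [-> | x00] := eqVneq x0 0.
    by rewrite addr0; apply: modK_KR; apply: sym1.
  have vx0 : (m + n)%:Z <= v x0 by case: hx0 => // e; rewrite e eqxx in x00.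
  have [J vJ] : exists J : nat, v x0 = J%:Z.
    by case ev: (v x0) => [J|J]; [exists J | rewrite ev in vx0].
  rewrite vJ in vx0.
  have JJ : (m + n <= J)%N by lia.
  have [u0 vu] := unit1p hv x00 (ltac:(rewrite vJ; lia) : 1 <= v x0).
  case bad: ((size s != n) || (0 \in s)).
    apply: modK_KR; apply: KR_bad; move: bad => /orP [h | h]; apply/orP; [left | right] => //.
    by rewrite inE h orbT.
  move/negbT: bad; rewrite negb_or negbK => /andP [/eqP ss s0].
  have hs : forall x, x \in s -> x != 0.
    by move=> t ht; apply/eqP => e; rewrite -e ht in s0.
  apply: (modK_trans _ (wsort hv p0 vp (n.+1) [:: 1 + x0] hs)) => z' [e [ge se ->]].
  case: ge => [ue | [us [ee uus]]].
    apply: modK_gen; exists (1 + x0), (sym e); split.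
    + by exists x0; split => //; right; rewrite vJ; lia.
    + by apply: Khat_units => //; rewrite se.
    + by rewrite consK_sym.
  subst e.
  have n1 : (1 <= n)%N by rewrite -ss -se.
  apply: (modK_trans _ (key hv p0 vp (n.+1) us x00 vJ (ltac:(lia)))).
  move=> z2 [y [w [y0 vy uw ->]]].
  apply: modK_gen; exists (1 + y), (sym (w :: us)); split.
  + by exists y; split => //; right; lia.
  + apply: Khat_units; first exact: allu_cons.
    by rewrite /= -ss -se.
  + by rewrite consK_sym.
Qed.
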